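(* Let $m=2k+1\ge3$ be odd, and write the Chebyshev polynomial of degree $m$ as $T_m(x)=\sum_{i=0}^{k}c_{2i+1}x^{2i+1}$. Let $s=\max\{v_2(m+1),v_2(m-1)\}$. Then $v_2(c_3)=s$ and $v_2(c_{2i+1})\ge s+1$ for all $1<i\le k$.
   Context: $v_2$ denotes the $2$-adic valuation. For an integer $m\ge0$, the $m$-th Chebyshev polynomial is $$T_m(x)=\sum_{k=0}^{\lfloor m/2\rfloor}(-1)^k\frac{m}{m-k}\binom{m-k}{k}2^{m-2k-1}x^{m-2k}.$$ For odd $m$ it contains only odd powers of $x$. *)

(* Defs.v *)
From mathcomp Require Import all_boot all_order all_algebra.
Set Implicit Arguments. Unset Strict Implicit. Unset Printing Implicit Defensive.
Import GRing.Theory Num.Theory.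
Local Open Scope ring_scope.

(* The rational m/(m-j) * C(m-j,j) is an integer (for m >= 1), so it is
   computed as the exact natural-number quotient (m * C(m-j,j)) %/ (m-j). *)
Definition chebT (m : nat) : {poly int} :=
  \sum_(j < (m./2).+1)
     (((-1) ^+ j * ((m * 'C(m - j, j)) %/ (m - j) * 2 ^ (m - 2 * j).-1)%N%:Z)%:P
      * 'X^(m - 2 * j)).

Definition cheb_coef (m d : nat) : int := (chebT m)`_d.

Definition v2 (z : int) : nat := logn 2 `|z|%N.

(* Main.v *)
Require Import Defs.
From mathcomp Require Import all_boot all_order all_algebra zify ring.
Import GRing.Theory Num.Theory.

Lemma coefE k i : (i <= k)%N ->
  cheb_coef (2*k+1) (2*i+1) =
  ((-1) ^+ (k - i) * ((((2*k+1) * 'C(2*k+1 - (k-i), k-i)) %/ (2*k+1 - (k-i)) * 2 ^ (2*i))%N)%:Z)%R.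
Proof.
move=> hik.
rewrite /cheb_coef /chebT coef_sum.
have hkk : ((2*k+1)./2 = k)%N.
  by rewrite addn1 mul2n -[(k.*2).+1./2]/(uphalf (k.*2)) uphalf_double.
rewrite hkk.
have hj : (k - i < k.+1)%N by lia.
rewrite (bigD1 (Ordinal hj)) //= big1 ?addr0.
  rewrite coefCM coefXn.
  have -> : (2 * i + 1 == 2 * k + 1 - 2 * (k - i))%N by apply/eqP; lia.
  rewrite mulr1; have -> : ((2 * k + 1 - 2 * (k - i)).-1 = 2 * i)%N by lia.
  by [].
move=> j hne; rewrite coefCM coefXn.
have -> : (2 * i + 1 == 2 * k + 1 - 2 * j)%N = false.
  apply/negbTE/eqP => h; move: hne => /eqP []; apply/val_inj => /=.
  have := ltn_ord j; lia.
by rewrite mulr0.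
Qed.

Lemma Nrel k i : (i <= k)%N ->
  ((2*i+1) * (((2*k+1) * 'C(2*k+1 - (k-i), k-i)) %/ (2*k+1 - (k-i))) = (2*k+1) * 'C(k+i, 2*i))%N.
Proof.
move=> hik.
have -> : (2*k+1 - (k-i) = (k+i).+1)%N by lia.
case: (ltngtP i k) hik => // [hlt|->] _; last first.
  by rewrite subnn bin0 muln1 addnn -mul2n binn addn1 divnn.
have hj : (k - i = (k - i - 1).+1)%N by lia.
have e1 : ((2*k+1) * 'C((k+i).+1, k-i) = (k+i).+1 * ('C((k+i).+1, k-i) + 'C(k+i, k-i-1)))%N.
  have := mul_bin_diag (k+i).+1 (k-i-1).
  rewrite -hj /= => h.
  rewrite mulnDr h -mulnDl; congr (_ * _)%N; lia.
rewrite e1 mulKn // mulnDr.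
have c1 : 'C((k+i).+1, k-i) = 'C((k+i).+1, (2*i).+1).
  by rewrite -bin_sub; [congr 'C(_,_); lia | lia].
have c2 : 'C(k+i, k-i-1) = 'C(k+i, (2*i).+1).
  by rewrite -bin_sub; [congr 'C(_,_); lia | lia].
rewrite c1 c2 addn1 -mul_bin_diag mul_bin_left /= -mulnDl; congr (_ * _)%N; lia.
Qed.

Lemma fact2 q : exists u, odd u /\ ((2*q)`! = 2^q * q`! * u)%N.
Proof.
elim: q => [|q [u [ou e]]]; first by exists 1%N.
exists ((2*q).+1 * u)%N; split; first by rewrite oddM /= oddM /= ou.
have -> : (2 * q.+1 = (2*q).+2)%N by lia.
rewrite !factS e expnS; nia.
Qed.

Lemma logn_odd u : odd u -> logn 2 u = 0%N.
Proof. by move=> h; apply: logn_coprime; rewrite coprime2n. Qed.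

Lemma logn_fact2 q : logn 2 (2*q)`! = (q + logn 2 q`!)%N.
Proof.
have [u [ou ->]] := fact2 q.
have u0 : (0 < u)%N by case: u ou.
rewrite lognM ?muln_gt0 ?expn_gt0 ?fact_gt0 // lognM ?expn_gt0 ?fact_gt0 //.
by rewrite pfactorK // (logn_odd _ ou) addn0.
Qed.

Lemma logn_fact_lt n : (0 < n)%N -> (logn 2 n`! < n)%N.
Proof.
elim: n {-2}n (leqnn n) => [|N IH] n hn n0; first by case: n hn n0.
have en := odd_double_half n.
move: en; set q := n./2; case: (odd n) => /= en; rewrite -en.
  rewrite add1n factS lognM ?fact_gt0 // logn_odd; last by rewrite /= odd_double.
  case hq: q => [|q']; first by rewrite /= logn1.
  rewrite -mul2n logn_fact2 add0n.
  have := IH q'.+1; lia.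
rewrite add0n -mul2n logn_fact2.
have := IH q; lia.
Qed.

Lemma ffact_split k i : (2 <= i <= k)%N ->
  ((k+i) ^_ (2*i) = (k+i)^_(i-2) * ((k+2)*(k+1)*k*(k-1)) * (k-2)^_(i-2))%N.
Proof.
move=> /andP [h2 hk].
have f4 : ((k+2)^_4 = (k+2)*(k+1)*k*(k-1))%N.
  rewrite !ffactnS ffactn0 /=.
  case: k hk {h2} => [|[|k]] hk //=; first by lia.
rewrite -f4.
apply/eqP; rewrite -(eqn_pmul2r (fact_gt0 (k-i))).
have e1 := ffact_fact (_ : 2*i <= k+i)%N.
have e2 := ffact_fact (_ : i-2 <= k+i)%N.
have e3 := ffact_fact (_ : 4 <= k+2)%N.
have e4 := ffact_fact (_ : i-2 <= k-2)%N.
have -> : (k - i = k + i - 2 * i)%N by lia.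
rewrite e1; last by lia.
have -> : (k + i - 2 * i = k - 2 - (i - 2))%N by lia.
rewrite -mulnA e4; last by lia.
have -> : (k - 2 = k + 2 - 4)%N by lia.
rewrite -mulnA e3; last by lia.
have -> : (k + 2 = k + i - (i - 2))%N by lia.
by rewrite e2; last by lia.
Qed.


Lemma coefN k i : (i <= k)%N -> exists N : nat,
  cheb_coef (2*k+1) (2*i+1) = ((-1) ^+ (k - i) * (N * 2 ^ (2*i))%N%:Z)%R /\
  ((2*i+1) * N = (2*k+1) * 'C(k+i, 2*i))%N.
Proof. by move=> h; eexists; split; [exact: coefE | exact: Nrel]. Qed.

Lemma logn2x x : (0 < x)%N -> logn 2 (2 * x) = (logn 2 x).+1.
Proof. by move=> h; rewrite lognM // (pfactorK 1). Qed.

Lemma s_eq k : (1 <= k)%N ->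
  maxn (logn 2 (2*k+1).+1) (logn 2 (2*k+1).-1) = (logn 2 (k*(k+1))).+1.
Proof.
move=> hk.
have -> : ((2*k+1).+1 = 2 * (k+1))%N by lia.
have -> : ((2*k+1).-1 = 2 * k)%N by lia.
rewrite !logn2x ?addn1 // lognM //.
case ok: (odd k).
  rewrite (logn_odd k) //; lia.
rewrite (logn_odd k.+1) /= ?ok //; lia.
Qed.

Lemma dvdz_sign (d n j : nat) : (d %| n)%N -> ((d%:Z) %| ((-1) ^+ j * n%:Z)%R)%Z.
Proof. by move=> h; rewrite /dvdz -topredE /= abszMsign. Qed.

Theorem lemma3p1 (k : nat) (hk : (1 <= k)%N) :
  let m := (2 * k + 1)%N in
  let s := maxn (logn 2 m.+1) (logn 2 m.-1) in
  cheb_coef m 3 != 0 /\ v2 (cheb_coef m 3) = s /\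
  (forall i : nat, (1 < i <= k)%N ->
     ((2 ^ s.+1)%N %| cheb_coef m (2 * i + 1))%Z).
Proof.
move=> m s; rewrite {}/s {}/m (s_eq k hk).
set a := logn 2 (k * (k+1)).
have kk0 : (0 < k * (k+1))%N by rewrite muln_gt0; lia.
have a1 : (1 <= a)%N.
  rewrite /a -(pfactor_dvdn 1) // expn1 dvdn2 oddM addn1 /=.
  by case: (odd k).
have om : coprime 2 (2*k+1) by rewrite coprime2n addn1 /= oddM.
split; last split.
- have [N [-> hN]] := coefN k 1 hk.
  have C0 : (0 < 'C(k+1, 2*1))%N by rewrite bin_gt0; lia.
  have N0 : (0 < N)%N by move: hN => /=; case: N => //=; nia.
  rewrite mulf_eq0 signr_eq0 /= -lt0n.
  by rewrite muln_gt0 N0 expn_gt0.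
- have [N [e hN]] := coefN k 1 hk.
  rewrite [2 * 1 + 1]/= in e; rewrite e /v2 abszMsign /=; clear e.
  rewrite (_ : 2 * 1 + 1 = 3)%N // (_ : 2 * 1 = 2)%N // in hN.
  have C0 : (0 < 'C(k+1, 2))%N by rewrite bin_gt0; lia.
  have N0 : (0 < N)%N by move: hN => /=; case: N => //=; nia.
  rewrite lognM ?expn_gt0 // pfactorK //.
  have : logn 2 (3 * N) = logn 2 ((2*k+1) * 'C(k+1, 2)) by rewrite -hN.
  rewrite (logn_Gauss _ (_ : coprime 2 3)) // (logn_Gauss _ om).
  have e2 : (2 * 'C(k+1, 2) = k * (k+1))%N.
    by rewrite -(mul_bin_diag (k+1) 1) bin1 addn1 /= mulnC.
  have : logn 2 (2 * 'C(k+1, 2)) = a by rewrite e2.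
  rewrite logn2x //; lia.
- move=> i /andP [hi1 hik].
  have [N [-> hN]] := coefN k i hik.
  apply: dvdz_sign.
  have B0 : (0 < 'C(k+i, 2*i))%N by rewrite bin_gt0; lia.
  have N0 : (0 < N)%N by move: hN; case: N => //=; nia.
  rewrite pfactor_dvdn ?muln_gt0 ?expn_gt0 ?N0 // lognM ?expn_gt0 // pfactorK //.
  have : logn 2 ((2*i+1) * N) = logn 2 ((2*k+1) * 'C(k+i, 2*i)) by rewrite hN.
  have oi : coprime 2 (2*i+1) by rewrite coprime2n addn1 /= oddM.
  rewrite (logn_Gauss _ oi) (logn_Gauss _ om) => eN.
  have hf := bin_ffact (k+i) (2*i).
  have hlt : (logn 2 (2*i)`! < 2*i)%N by apply: logn_fact_lt; lia.
  have P0 : (0 < (k+i)^_(2*i))%N by rewrite ffact_gt0; lia.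
  have : (logn 2 ((k+2)*(k+1)*k*(k-1)) <= logn 2 ((k+i)^_(2*i)))%N.
    apply: dvdn_leq_log => //.
    rewrite ffact_split; last by lia.
    by rewrite -mulnA dvdn_mulr // dvdn_mull.
  have ev : (1 <= logn 2 ((k+2) * (k-1)))%N.
    rewrite -(pfactor_dvdn 1) ?muln_gt0 // ?expn1 ?dvdn2 ?oddM; last by lia.
    case: k hk hik {a kk0 a1 om hN eN B0 N0 P0 hf} => [|[|k]] //= _ _.
    by rewrite addn2 /=; case: (odd k).
  have -> : ((k+2)*(k+1)*k*(k-1) = (k*(k+1)) * ((k+2)*(k-1)))%N by ring.
  rewrite -hf lognM; last by rewrite muln_gt0; lia.
    rewrite -/a (lognM _ B0 (fact_gt0 _)).
    move: hlt; lia.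
  done.
Qed.
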